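(* For every node-edge-checkable problem $P$, the problem $\mathrm{R}^*(P)$ allows port-local relaxations. That is, for every node-edge-checkable problem $\Pi$ with $\Pi\xrightarrow{0}\mathrm{R}^*(P)$, there is a port-local relaxation from $\Pi$ to $\mathrm{R}^*(P)$.
   Context: Fix $\Delta$. A node-edge-checkable problem $\Pi=(\Sigma_\Pi,\mathcal{N}_\Pi,\mathcal{E}_\Pi)$ has a finite label set, a node constraint $\mathcal{N}_\Pi$ (a set of cardinality-$\Delta$ multisets over $\Sigma_\Pi$) and an edge constraint $\mathcal{E}_\Pi$ (a set of cardinality-$2$ multisets). Relaxation. $\Pi\xrightarrow{0}\Pi'$ means there is a map $f$ with the following properties. For every $C=L_1\dots L_\Delta\in\mathcal{N}_\Pi$ and every $j$, $f$ assigns a label $f(C,j)\in\Sigma_{\Pi'}$. The map must satisfy: - $f(C,1)\dots f(C,\Delta)\in\mathcal{N}_{\Pi'}$; - whenever the $j$-th entry of $C$ and the $j'$-th entry of $C'$ form an element of $\mathcal{E}_\Pi$, then $f(C,j)f(C',j')\in\mathcal{E}_{\Pi'}$. A port-local relaxation from $\Pi$ to $\hat\Pi$ is a function $g:\Sigma_\Pi\to\Sigma_{\hat\Pi}$ such that: - $g(L_1)\dots g(L_\Delta)\in\mathcal{N}_{\hat\Pi}$ for every $L_1\dots L_\Delta\in\mathcal{N}_\Pi$; - $g(L_1)g(L_2)\in\mathcal{E}_{\hat\Pi}$ for every $L_1L_2\in\mathcal{E}_\Pi$. The problem $\mathrm{R}^*(P)$ is defined as follows. - Labels are the nonempty subsets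 of $\Sigma_P$. - Node configurations are the $S_1\dots S_\Delta$ admitting $L_i\in S_i$ with $L_1\dots L_\Delta\in\mathcal{N}_P$. - Edge configurations are the $S_1S_2$ with $L_1L_2\in\mathcal{E}_P$ for all $L_1\in S_1,L_2\in S_2$. *)

(* Defs.v *)
From mathcomp Require Import all_boot.
Set Implicit Arguments. Unset Strict Implicit. Unset Printing Implicit Defensive.

(* Node configurations (multisets of size D) are represented by D-tuples,
   the node constraint being required to be invariant under permutations;
   edge configurations (multisets of size 2) by a symmetric relation. *)
Record problem (D : nat) := Problem {
  lab : finType;
  node : pred (D.-tuple lab);
  edge : rel lab
}.
Arguments lab {D} p.
Arguments node {D} p.
Arguments edge {D} p.

Definition wf_problem D (P : problem D) : Prop :=
  (forall t t' : D.-tuple (lab P), perm_eq t t' -> node P t = node P t') /\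
  (forall x y : lab P, edge P x y = edge P y x).

Definition labels_used D (P : problem D) : Prop :=
  forall L : lab P, exists C : D.-tuple (lab P), node P C /\ L \in C.

Definition RLab D (P : problem D) : finType := {S : {set lab P} | S != set0}.

Definition Rstar D (P : problem D) : problem D :=
  @Problem D (RLab P)
    (fun t : D.-tuple (RLab P) =>
       [exists u : D.-tuple (lab P),
          [forall i : 'I_D, tnth u i \in val (tnth t i)] && node P u])
    (fun S1 S2 : RLab P =>
       [forall x in val S1, forall y in val S2, edge P x y]).

Definition relax0 D (Pi Pi' : problem D) : Prop :=
  exists f : D.-tuple (lab Pi) -> 'I_D -> lab Pi',
    (forall C, node Pi C -> node Pi' [tuple f C j | j < D]) /\
    (forall C C' (j j' : 'I_D), node Pi C -> node Pi C' ->
        edge Pi (tnth C j) (tnth C' j') -> edge Pi' (f C j) (f C' j')).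

Definition port_local_relax D (Pi Pi' : problem D) : Prop :=
  exists g : lab Pi -> lab Pi',
    (forall C, node Pi C -> node Pi' (map_tuple g C)) /\
    (forall L1 L2, edge Pi L1 L2 -> edge Pi' (g L1) (g L2)).

(* Main.v *)
Require Import Defs.
From mathcomp Require Import all_boot.

Theorem mainTheorem10 (D : nat) (P Pi : problem D) :
  wf_problem P -> wf_problem Pi -> labels_used Pi ->
  relax0 Pi (Rstar P) -> port_local_relax Pi (Rstar P).
Proof.
move=> _ _ Hused [f [Hn He]].
pose S (L : lab Pi) : {set lab P} :=
  \bigcup_(C : D.-tuple (lab Pi) | node Pi C)
     \bigcup_(j : 'I_D | tnth C j == L) val (f C j).
have HS : forall L, S L != set0.
  move=> L; have [C [HC LC]] := Hused L.
  have [j _ Ej] : exists2 j : 'I_D, true & tnth C j = L.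
    case/tnthP: LC => j ->; by exists j.
  have := valP (f C j); case/set0Pn => x Hx.
  apply/set0Pn; exists x; apply/bigcupP; exists C => //.
  apply/bigcupP; exists j => //; exact/eqP.
pose g (L : lab Pi) : lab (Rstar P) := exist _ (S L) (HS L).
exists g; split.
- move=> C HC; have := Hn C HC => /= /existsP [u /andP [Hu Nu]].
  apply/existsP; exists u; rewrite Nu andbT; apply/forallP => i.
  have := forallP Hu i; rewrite !tnth_map /= tnth_ord_tuple => Hi.
  apply/bigcupP; exists C => //; apply/bigcupP; exists i => //.
- move=> L1 L2 E12 /=; apply/forallP => x; apply/implyP => /bigcupP [C HC /bigcupP [j /eqP Ej Hx]].
  apply/forallP => y; apply/implyP => /bigcupP [C' HC' /bigcupP [j' /eqP Ej' Hy]].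
  have := He C C' j j' HC HC'; rewrite Ej Ej' => /(_ E12) /= /forallP /(_ x).
  rewrite Hx /= => /forallP /(_ y); by rewrite Hy.
Qed.
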